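(* Let $S_{\rm tr}, S_1,\dots,S_m$ be the output of Algorithm 1 (defined in the context) and set $\beta := \sum_{i=1}^m f_i(S_{\rm tr})$. If every $f_i$ is monotone and submodular, then $$\sum_{i=1}^m f_i(S_{\rm tr}\cup S_i)\;\ge\;\max\Bigl\{\beta,\;(1-1/e)(\mathrm{OPT}-2\beta)+\beta\Bigr\}.$$ Consequently $\sum_{i=1}^m f_i(S_{\rm tr}\cup S_i)\ge \tfrac12\,\mathrm{OPT}$ for every value of $\beta$.
   Context: $V$ is a finite ground set with $|V|=n$; $k,l$ are integers with $1\le l<k\le n$. For $i=1,\dots,m$, $f_i:2^V\to\mathbb{R}_{\ge 0}$ is a set function; $f_i$ is monotone if $A\subseteq B\Rightarrow f_i(A)\le f_i(B)$ and submodular if $f_i(A)+f_i(B)\ge f_i(A\cup B)+f_i(A\cap B)$ for all $A,B\subseteq V$. Write $\Delta_i(e\mid S)=f_i(S\cup\{e\})-f_i(S)$. Define $$\mathrm{OPT}=\max_{S_{\rm tr}\subseteq V,\,|S_{\rm tr}|\le l}\;\sum_{i=1}^m\;\max_{S_i\subseteq V,\,|S_i|\le k-l} f_i(S_{\rm tr}\cup S_i).$$ Algorithm 1: start with $S_{\rm tr}=S_1=\dots=S_m=\emptyset$. Phase 1: for $t=1,\dots,l$, choose $e^*\in\arg\max_{e\in V\setminus S_{\rm tr}}\sum_{i=1}^m\Delta_i(e\mid S_{\rm tr})$ and set $S_{\rm tr}\leftarrow S_{\rm tr}\cup\{e^*\}$. Phase 2: for $t=1,\dots,k-l$ and for each $i=1,\dots,m$,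 choose $e_i^*\in\arg\max_{e\in V\setminus(S_{\rm tr}\cup S_i)}\Delta_i(e\mid S_{\rm tr}\cup S_i)$ and set $S_i\leftarrow S_i\cup\{e_i^*\}$. Output $S_{\rm tr},S_1,\dots,S_m$. Ties in all argmax's are broken arbitrarily. *)

(* Defs.v *)
From mathcomp Require Import all_boot all_order all_algebra.
From mathcomp Require Import reals sequences exp.
Set Implicit Arguments. Unset Strict Implicit. Unset Printing Implicit Defensive.
Import Order.TTheory GRing.Theory Num.Theory.
Local Open Scope ring_scope.

Section Defs.
Variables (R : realType) (V : finType).

Definition monotone_fn (f : {set V} -> R) : Prop :=
  forall A B : {set V}, A \subset B -> f A <= f B.

Definition submodular_fn (f : {set V} -> R) : Prop :=
  forall A B : {set V}, f A + f B >= f (A :|: B) + f (A :&: B).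

Definition marginal (f : {set V} -> R) (e : V) (S : {set V}) : R :=
  f (e |: S) - f S.

(* [greedy_run g base s]: the sequence s records the successive choices of the
   greedy algorithm that, starting from the set [base], at step t adds an element
   e* of V \ (base u {s_0..s_(t-1)}) maximizing the marginal gain of g, with
   ties broken arbitrarily (any maximizer is allowed). *)
Definition greedy_run (g : {set V} -> R) (base : {set V}) (s : seq V) : Prop :=
  forall (t : nat) (x0 : V), (t < size s)%N ->
    let A := base :|: [set x in take t s] in
    let e := nth x0 s t in
    e \notin A /\ forall e', e' \notin A -> marginal g e' A <= marginal g e A.

(* Maxima are over nonempty finite families (set0 is admissible) of
   nonnegative reals, so folding Num.max with neutral element 0 computes
   exactly the maximum. *)
Definition OPT (m : nat) (f : 'I_m -> {set V} -> R) (k l : nat) : R :=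
  \big[Num.max/0]_(Str : {set V} | (#|Str| <= l)%N)
     \sum_(i < m) \big[Num.max/0]_(Si : {set V} | (#|Si| <= k - l)%N)
                     f i (Str :|: Si).

End Defs.

(* Main.v *)
Require Import Defs.
From mathcomp Require Import all_boot all_order all_algebra.
From mathcomp Require Import reals sequences exp.
From mathcomp Require Import lra.
Import Order.TTheory GRing.Theory Num.Theory.
Local Open Scope ring_scope.
Set Implicit Arguments.
Unset Strict Implicit.

Section Aux.
Variables (R : realType) (V : finType) (g : {set V} -> R).
Hypotheses (mono : monotone_fn g) (subm : submodular_fn g).

Lemma marg_ge0 e (A : {set V}) : 0 <= marginal g e A.
Proof. by rewrite /marginal subr_ge0; apply: mono; apply: subsetUr. Qed.

Lemma marg_anti e (A B : {set V}) : A \subset B -> marginal g e B <= marginal g e A.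
Proof.
move=> AB; have := subm (e |: A) B.
rewrite -setUA (setUidPr AB).
have : g A <= g ((e |: A) :&: B).
  by apply: mono; rewrite subsetI subsetUr AB.
rewrite /marginal; timeout 20 lra.
Qed.

Lemma marg_zero e (A : {set V}) : e \in A -> marginal g e A = 0.
Proof.
by move=> eA; rewrite /marginal (setUidPr _) ?subrr // sub1set.
Qed.

Lemma union_seq (A : {set V}) (s : seq V) :
  g (A :|: [set x in s]) <= g A + \sum_(e <- s) marginal g e A.
Proof.
elim: s => [|a s IH].
  have -> : [set x in [::] : seq V] = set0 by apply/setP => x; rewrite !inE.
  by rewrite setU0 big_nil addr0.
have -> : [set x in a :: s] = a |: [set x in s] by apply/setP => x; rewrite !inE.
rewrite setUCA big_cons.
have h1 : marginal g a (A :|: [set x in s]) <= marginal g a A.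
  by apply: marg_anti; apply: subsetUl.
move: h1 IH; rewrite /marginal; timeout 20 lra.
Qed.

Lemma union_set (A T : {set V}) :
  g (A :|: T) <= g A + \sum_(e in T) marginal g e A.
Proof.
have := union_seq A (enum T).
have -> : [set x in enum T] = T by apply/setP => x; rewrite inE mem_enum.
by rewrite big_enum.
Qed.

Lemma step_eq (base : {set V}) (s : seq V) t x0 : (t < size s)%N ->
  g (base :|: [set x in take t.+1 s]) - g (base :|: [set x in take t s])
  = marginal g (nth x0 s t) (base :|: [set x in take t s]).
Proof.
move=> ts; rewrite (take_nth x0 ts) /marginal.
have -> : [set x in rcons (take t s) (nth x0 s t)]
   = nth x0 s t |: [set x in take t s].
  by apply/setP => x; rewrite !inE mem_rcons inE.
by rewrite setUCA.
Qed.

Lemma greedy_phase1 (s : seq V) e : greedy_run g set0 s -> e \notin [set x in s] ->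
  (size s)%:R * marginal g e [set x in s] <= g [set x in s] - g set0.
Proof.
move=> gr enot.
have [x0 _] : exists x0 : V, True.
  case: s gr enot => [|x _] _ _; first by exists e.
  by exists x.
pose a t := g (set0 :|: [set x in take t s]).
have -> : g [set x in s] - g set0 = a (size s) - a 0%N.
  rewrite /a take_size take0 !set0U; congr (_ - g _).
rewrite -telescope_sumr // mulr_natl -[X in _ *+ X]subn0 -sumr_const_nat; rewrite big_nat_cond [X in _ <= X]big_nat_cond.
apply: ler_sum => t /andP [/andP [_ ts] _].
rewrite /a (step_eq _ x0) //.
have [hn hmax] := gr t x0 ts.
apply: le_trans (hmax e _).
  apply: marg_anti; rewrite set0U; apply/subsetP => x; rewrite !inE.
  exact: mem_take.
apply: contra enot; rewrite set0U !inE; exact: mem_take.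
Qed.

Lemma greedy_bound (A0 : {set V}) (s : seq V) r (T : {set V}) : size s = r -> (0 < r)%N -> greedy_run g A0 s ->
  (#|T| <= r)%N ->
  (1 - expR (-1)) * (g (A0 :|: T) - g A0) <= g (A0 :|: [set x in s]) - g A0.
Proof.
move=> sz r0 gr Tr.
have [x0 _] : exists x0 : V, True.
  case: s sz gr => [|x s2] /= sz _; [by rewrite -sz in r0 | by exists x].
pose O := g (A0 :|: T).
pose d t := O - g (A0 :|: [set x in take t s]).
have rpos : (0 : R) < r%:R by rewrite ltr0n.
have step : forall t, (t < r)%N -> d t <= r%:R * (d t - d t.+1).
  move=> t tr; rewrite -sz in tr.
  have e1 : d t - d t.+1 = marginal g (nth x0 s t) (A0 :|: [set x in take t s]).
    by rewrite -(step_eq _ x0) // /d; timeout 20 lra.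
  rewrite e1.
  set At := A0 :|: [set x in take t s].
  set gain := marginal g _ At.
  have gain0 : 0 <= gain by apply: marg_ge0.
  have h1 : O <= g (At :|: T).
    by apply: mono; apply: setSU; apply: subsetUl.
  have h2 := union_set At T.
  have h3 : \sum_(e in T) marginal g e At <= \sum_(e in T) gain.
    apply: ler_sum => e _.
    case: (boolP (e \in At)) => eA; first by rewrite marg_zero.
    by have [_ hm] := gr t x0 tr; timeout 20 apply: hm.
  rewrite sumr_const in h3.
  have h4 : gain *+ #|T| <= gain *+ r.
    rewrite -[gain *+ #|T|]mulr_natr -[gain *+ r]mulr_natr; apply: ler_wpM2l => //; by rewrite ler_nat.
  rewrite mulr_natl; rewrite /d; move: h1 h2 h3 h4; timeout 20 lra.
pose q : R := 1 - (r%:R)^-1.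
have q0 : 0 <= q.
  rewrite /q subr_ge0 invf_le1 //; by rewrite ler1n.
have dstep : forall t, (t < r)%N -> d t.+1 <= q * d t.
  move=> t tr; have := step t tr.
  have rne : r%:R != 0 :> R by rewrite gt_eqF.
  move=> h.
  have h' : d t / r%:R <= d t - d t.+1.
    by rewrite ler_pdivrMr // mulrC.
  rewrite /q mulrBl mul1r mulrC; timeout 20 lra.
have dind : forall t, (t <= r)%N -> d t <= q ^+ t * d 0%N.
  elim => [|t IH] tr; first by rewrite expr0 mul1r.
  apply: le_trans (dstep t tr) _.
  rewrite exprS -mulrA; apply: ler_wpM2l => //; apply: IH; exact: ltnW.
have d00 : 0 <= d 0%N.
  rewrite /d /O take0 subr_ge0; apply: mono; apply: setUS.
  by apply/subsetP => x; rewrite inE.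
have qe : q ^+ r <= expR (-1).
  have -> : (-1 : R) = (- r%:R^-1) * r%:R.
    by rewrite mulNr mulVf // gt_eqF.
  rewrite expRM_natr; apply: lerXn2r; rewrite ?nnegrE ?expR_ge0 //.
  exact: expR_ge1Dx.
have := dind r (leqnn r).
have : q ^+ r * d 0%N <= expR (-1) * d 0%N by apply: ler_wpM2r.
have -> : d r = O - g (A0 :|: [set x in s]) by rewrite /d -sz take_size.
have -> : d 0%N = O - g A0.
  rewrite /d take0; congr (_ - g _); apply/setP => x; rewrite !inE orbF //.
rewrite /O; timeout 20 lra.
Qed.

End Aux.

Theorem proposition1 (R : realType) (V : finType) (k l m : nat)
  (f : 'I_m -> {set V} -> R)
  (s_tr : seq V) (s : 'I_m -> seq V) :
  (1 <= l)%N -> (l < k)%N -> (k <= #|V|)%N ->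
  (forall i A, 0 <= f i A) ->
  (forall i, monotone_fn (f i)) ->
  (forall i, submodular_fn (f i)) ->
  (* Phase 1: l greedy steps on sum_i f_i starting from the empty set *)
  size s_tr = l ->
  greedy_run (fun A => \sum_(i < m) f i A) set0 s_tr ->
  (* Phase 2: for each i, k - l greedy steps on f_i starting from S_tr *)
  (forall i, size (s i) = (k - l)%N) ->
  (forall i, greedy_run (f i) [set x in s_tr] (s i)) ->
  let S_tr := [set x in s_tr] in
  let S := fun i => [set x in s i] in
  let beta := \sum_(i < m) f i S_tr in
  let val := \sum_(i < m) f i (S_tr :|: S i) in
  Num.max beta ((1 - expR (- 1)) * (OPT f k l - 2 * beta) + beta) <= val
  /\ OPT f k l / 2 <= val.
Proof.
move=> l1 lk kV f0 fmono fsub sztr grtr szs grs S_tr S beta val.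
pose c : R := 1 - expR (-1).
have e2 : expR (-1) <= 2^-1 :> R.
  rewrite expRN lef_pV2 ?posrE ?expR_gt0 //.
  by have := expR_ge1Dx (1 : R); rewrite (_ : 1 + 1 = 2).
have c0 : 0 < c by rewrite /c subr_gt0 expR_lt1 ltrN10.
have c2 : 2^-1 <= c.
  rewrite /c; move: e2; lra.
have c1 : c <= 1 by rewrite /c lerBlDr lerDl expR_ge0.
pose F := fun A => \sum_(i < m) f i A.
have FM : monotone_fn F by move=> A B AB; apply: ler_sum => i _; exact: fmono.
have FS : submodular_fn F.
  move=> A B; rewrite /F -!big_split /=; apply: ler_sum => i _; exact: fsub.
have r0 : (0 < k - l)%N by rewrite subn_gt0.
have vi : forall i, f i S_tr <= f i (S_tr :|: S i).
  by move=> i; apply: fmono; apply: subsetUl.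
have hval : beta <= val by apply: ler_sum => i _; exact: vi.
have hbeta0 : 0 <= beta by apply: sumr_ge0 => i _.
pose Bi i Str := f i S_tr + (f i (S_tr :|: S i) - f i S_tr) / c
   + \sum_(e in Str :\: S_tr) marginal (f i) e S_tr.
have key1 : forall i (Str Si : {set V}), (#|Si| <= k - l)%N -> f i (Str :|: Si) <= Bi i Str.
  move=> i Str Si HSi.
  have g1 := greedy_bound (fmono i) (fsub i) (szs i) r0 (grs i) HSi.
  have g2 : f i (S_tr :|: Si) - f i S_tr <= (f i (S_tr :|: S i) - f i S_tr) / c.
    by rewrite ler_pdivlMr // mulrC.
  have u := union_set (fmono i) (fsub i) (S_tr :|: Si) (Str :\: S_tr).
  have m1 : f i (Str :|: Si) <= f i ((S_tr :|: Si) :|: (Str :\: S_tr)).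
    apply: fmono; apply/subsetP => x; rewrite !inE.
    by case: (x \in s_tr); case: (x \in Str); case: (x \in Si).
  have s1 : \sum_(e in Str :\: S_tr) marginal (f i) e (S_tr :|: Si)
         <= \sum_(e in Str :\: S_tr) marginal (f i) e S_tr.
    apply: ler_sum => e _; apply: (marg_anti (fmono i) (fsub i)); exact: subsetUl.
  rewrite /Bi; move: g2 u m1 s1; lra.
have key0 : forall i (Str : {set V}), 0 <= Bi i Str.
  move=> i Str; rewrite /Bi; apply: addr_ge0; last first.
    by apply: sumr_ge0 => e _; apply: marg_ge0.
  apply: addr_ge0 => //; apply: divr_ge0; [by rewrite subr_ge0 | exact: ltW].
have key2 : forall i (Str : {set V}),
   \big[Num.max/0]_(Si : {set V} | (#|Si| <= k - l)%N) f i (Str :|: Si) <= Bi i Str.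
  move=> i Str; apply: (big_ind (fun x => x <= Bi i Str)) => //.
  - by move=> x y hx hy; rewrite ge_max hx hy.
  - by move=> Si HSi; apply: key1.
have phase1 : forall e, e \notin S_tr -> marginal F e S_tr <= beta / l%:R.
  move=> e en.
  have := greedy_phase1 FM FS grtr en.
  have F0 : 0 <= F set0 by apply: sumr_ge0.
  rewrite sztr ler_pdivlMr ?ltr0n // mulrC.
  rewrite /beta /F /S_tr in F0 *; lra.
have sumD : forall Str : {set V}, (#|Str| <= l)%N ->
    \sum_(e in Str :\: S_tr) marginal F e S_tr <= beta.
  move=> Str HStr.
  apply: le_trans (_ : \sum_(e in Str :\: S_tr) (beta / l%:R) <= _).
    apply: ler_sum => e; rewrite inE => /andP [en _]; exact: phase1.
  rewrite sumr_const.
  have cD : (#|Str :\: S_tr| <= l)%N.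
    apply: leq_trans HStr; apply: subset_leq_card; exact: subsetDl.
  apply: le_trans (_ : beta / l%:R *+ l <= _).
    rewrite -[beta / l%:R *+ #|_|]mulr_natr -[beta / l%:R *+ l]mulr_natr; apply: ler_wpM2l.
      by apply: divr_ge0.
    by rewrite ler_nat.
  by rewrite -mulr_natr divfK // pnatr_eq0 -lt0n.
have key3 : forall Str : {set V}, (#|Str| <= l)%N ->
   \sum_(i < m) \big[Num.max/0]_(Si : {set V} | (#|Si| <= k - l)%N) f i (Str :|: Si)
   <= 2 * beta + (val - beta) / c.
  move=> Str HStr.
  apply: le_trans (ler_sum _ (fun i _ => key2 i Str)) _.
  rewrite /Bi !big_split /=.
  have E : \sum_(i < m) \sum_(e in Str :\: S_tr) marginal (f i) e S_tr
         = \sum_(e in Str :\: S_tr) marginal F e S_tr.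
    rewrite exchange_big; apply: eq_bigr => e _; by rewrite /marginal /F sumrB.
  have E2 : \sum_(i < m) (f i (S_tr :|: S i) - f i S_tr) / c = (val - beta) / c.
    by rewrite -mulr_suml sumrB.
  rewrite E E2; have := sumD Str HStr; rewrite /beta; lra.
have OPTb : OPT f k l <= 2 * beta + (val - beta) / c.
  rewrite /OPT; apply: (big_ind (fun x => x <= 2 * beta + (val - beta) / c)).
  - apply: addr_ge0; first by apply: mulr_ge0.
    by apply: divr_ge0; [rewrite subr_ge0 | exact: ltW].
  - by move=> x y hx hy; rewrite ge_max hx hy.
  - by move=> Str HStr; apply: key3.
have main : c * (OPT f k l - 2 * beta) + beta <= val.
  have : c * (OPT f k l - 2 * beta) <= c * ((val - beta) / c).
    by apply: ler_wpM2l; [exact: ltW | lra].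
  rewrite [c * ((val - beta) / c)]mulrC divfK ?gt_eqF //; lra.
split; first by rewrite ge_max hval main.
case: (lerP (OPT f k l) (2 * beta)) => h.
  lra.
have : 2^-1 * (OPT f k l - 2 * beta) <= c * (OPT f k l - 2 * beta).
  by apply: ler_wpM2r => //; lra.
move: main; lra.
Qed.
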